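(* Let $\mathcal T$ denote the set of Smirnov trees and, for $T\in\mathcal T$, let $a(T)$ be the label of its principal node $\alpha(T)$. Consider the set $$\mathcal X=\{(T,S,b)\in \mathcal T\times(\mathcal T\cup\{D,U\})\times\mathbb N:\ a(T)\neq b\},$$ where $D$ and $U$ are two formal symbols. Then the map $\Phi$ (defined in the context) is a well-defined bijection from $\mathcal X$ onto the set of Smirnov trees with at least $2$ nodes; it is weight-preserving, i.e. $w(\Phi(T,S,b))=w(T,S,b)$ for all $(T,S,b)\in\mathcal X$; and the principal node of $\Phi(T,S,b)$ has label $b$.
   Context: Trees are labeled rooted binary trees (each child is either a left or a right child, each node has at most one left and one right child) with labels in the positive integers $\mathbb N=\{1,2,\dots\}$, and have at least one node. Such a tree is a Smirnov tree if: whenever a left child has the same label $i$ as its parent, the parent also has a right child with label $<i$; and whenever a right child has the same label $i$ as its parent, the parent also has a left child with label $>i$. Let $\mathcal T$ be the set of Smirnov trees and $\mathcal T^c$ those whose root has label $c$. Principal path $P(T)$: start at the root; if the current vertex has no right child, stop; if the current vertex has a left child with the same label, move to that left child; otherwise move to the right child. The last vertex of $P(T)$ is the principal node $\alpha(T)$, with label $a(T)$; $M(T)$ and $m(T)$ are the maximum and minimum labels on $P(T)$. Weights: $\rho,\bar\rho,\lambda,\bar\lambda$ are commuting indeterminates and $x_1,x_2,\dots$ commuting variables. An edge from a parent with label $a$ to its right child with label $b$ has weight $\bar\rho$ if $a\le b$ and $\rho$ if $a>b$. An edge between a left child with label $a$ and its parent with label $b$ has weight $\bar\lambda$ if $a\le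 b$ and $\lambda$ if $a>b$. A node with label $a$ has weight $x_a$. The weight $w(T)$ of a tree is the product of the weights of all its edges and nodes. Weight of a triple $(T,S,b)\in\mathcal X$, with $a=a(T)$: $w(T,S,b)$ equals $\bar\rho\,w(T)x_b$ if $a<b,S=D$; $\rho\,w(T)x_b$ if $a>b,S=D$; $\bar\lambda\,w(T)x_b$ if $a<b,S=U$; $\lambda\,w(T)x_b$ if $a>b,S=U$; $\bar\lambda\bar\rho\,w(T)w(S)x_b$ if $a<b,S\in\mathcal T$; $\lambda\rho\,w(T)w(S)x_b$ if $a>b,S\in\mathcal T$. Definition of $\Phi(T,S,b)$. Write $\alpha=\alpha(T)$, $a=a(T)$, $P=P(T)$, $M=M(T)$, $m=m(T)$; if $S\in\mathcal T$ let $c$ be the label of its root. If $a<b$ (resp. $a>b$), let $\delta$ be the last vertex on $P$ with label $\ge b$ (resp. $\le b$) and $d$ its label (undefined if no such vertex exists). Note $\alpha$ has no right child. (1) If $S=D$, or $S\in\mathcal T^c$ with $a,c<b$, or $S\in\mathcal T^c$ with $a,c>b$: add to $\alpha$ a right child $\beta$ with label $b$; if $S=D$, $\beta$ has no children; if $S\in\mathcal T$, $\beta$ has $S$ as its left subtree (and no right child). (2) If $S=U$ and $a<b$, $M<b$; or $S=U$ and $a>b$, $m>b$; or $S\in\mathcal T^c$ and $a<b$, $M<b\le c$; or $S\in\mathcal T^c$ and $a>b$, $m>b\ge c$: add a new root $\beta$ with label $b$ whose left subtree is $T$ (and no right child); if $S\in\mathcal T$, additionally make $S$ the right subtree of $\alpha$.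 (3) If $S=U$, $a<b\le M$, $d>b$; or $S=U$, $a>b\ge m$, $d<b$; or $S\in\mathcal T^c$, $a<b$, $b\le c$, $b\le M$, $d>b$; or $S\in\mathcal T^c$, $a>b$, $b\ge c$, $b\ge m$, $d<b$: replace the right subtree of $\delta$ by a new node $\beta$ with label $b$, which has no right child and whose left subtree is the former right subtree of $\delta$; if $S\in\mathcal T$, additionally make $S$ the right subtree of $\alpha$. (4) If $S=U$, $a<b\le M$, $d=b$; or $S\in\mathcal T^c$, $a<b$, $b\le c$, $b\le M$, $d=b$: replace the left subtree of $\delta$ by a new node $\beta$ with label $b$, which has no right child and whose left subtree is the former left subtree of $\delta$ (empty if $\delta$ had none); if $S\in\mathcal T$, additionally make $S$ the right subtree of $\alpha$. (5) If $S=U$, $a>b\ge m$, $d=b$; or $S\in\mathcal T^c$, $a>b$, $b\ge c$, $b\ge m$, $d=b$: make the former right subtree of $\delta$ its new left subtree, and make its new right child a new node $\beta$ with label $b$, which has no right child and whose left subtree is the former left subtree of $\delta$; if $S\in\mathcal T$, additionally make $S$ the right subtree of $\alpha$. *)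

(* Defs.v *)
From mathcomp Require Import all_boot all_algebra.
Set Implicit Arguments. Unset Strict Implicit. Unset Printing Implicit Defensive.
Import GRing.Theory.

(* Labeled rooted binary trees; [Leaf] is the EMPTY (sub)tree, so a tree
   "with at least one node" is a [btree] different from [Leaf]. *)
Inductive btree : Type :=
| Leaf : btree
| Node : btree -> nat -> btree -> btree.

Definition isLeaf (t : btree) : bool := if t is Leaf then true else false.

(* label of the root; 0 for the empty tree (labels of real nodes are >= 1) *)
Definition lab (t : btree) : nat := if t is Node _ a _ then a else 0.

Fixpoint nnodes (t : btree) : nat :=
  if t is Node l _ r then (nnodes l + nnodes r).+1 else 0.

(* Smirnov condition at every node, plus labels in N = {1,2,...} *)
Fixpoint smir (t : btree) : bool :=
  match t with
  | Leaf => true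
  | Node l a r =>
      [&& 0 < a,
          (~~ isLeaf l && (lab l == a)) ==> (~~ isLeaf r && (lab r < a)),
          (~~ isLeaf r && (lab r == a)) ==> (~~ isLeaf l && (a < lab l)),
          smir l & smir r]
  end.

Definition smirnov (t : btree) : bool := ~~ isLeaf t && smir t.

(* Principal path: directions (false = go to left child, true = go to right
   child) and labels of the vertices on P(T). *)
Fixpoint pdirs (t : btree) : seq bool :=
  match t with
  | Leaf => [::]
  | Node l a r =>
      if isLeaf r then [::]
      else if ~~ isLeaf l && (lab l == a) then false :: pdirs l
      else true :: pdirs r
  end.

Fixpoint plabels (t : btree) : seq nat :=
  match t with
  | Leaf => [::]
  | Node l a r =>
      a :: (if isLeaf r then [::]
            else if ~~ isLeaf l && (lab l == a) then plabels l
            else plabels r)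
  end.

Definition plab (t : btree) : nat := last 0 (plabels t).
Definition pmax (t : btree) : nat := foldr maxn 0 (plabels t).
Definition pmin (t : btree) : nat :=
  foldr minn (head 0 (plabels t)) (plabels t).

Fixpoint subst_at (ds : seq bool) (f : btree -> btree) (t : btree) : btree :=
  match ds, t with
  | [::], _ => f t
  | _, Leaf => Leaf
  | false :: ds', Node l a r => Node (subst_at ds' f l) a r
  | true :: ds', Node l a r => Node l a (subst_at ds' f r)
  end.

Fixpoint lastidx (p : pred nat) (s : seq nat) : nat :=
  match s with
  | [::] => 0
  | _ :: s' => if has p s' then (lastidx p s').+1 else 0
  end.

Inductive Sarg : Type := SD | SU | ST of btree.

Definition inX (T : btree) (S : Sarg) (b : nat) : Prop :=
  [/\ smirnov T,
      (if S is ST s then smirnov s else true),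
      0 < b & plab T != b].

Definition set_right (s : btree) (t : btree) : btree :=
  if t is Node l x _ then Node l x s else Leaf.

Definition Phi (T : btree) (S : Sarg) (b : nat) : btree :=
  let a := plab T in
  let ds := pdirs T in
  let P := plabels T in
  let M := pmax T in
  let m := pmin T in
  let up := a < b in
  let attachS := fun t => if S is ST s then subst_at ds (set_right s) t else t in
  let p : pred nat := if up then (fun x => b <= x) else (fun x => x <= b) in
  let k := lastidx p P in
  let d := nth 0 P k in
  let dds := take k ds in
  let case1 := match S with
               | SD => true
               | SU => false
               | ST s => ((a < b) && (lab s < b)) || ((b < a) && (b < lab s))
               end in
  let Uok := match S with
             | SD => false
             | SU => true
             | ST s => if up then b <= lab s else lab s <= b
             end in
  if case1 then
    subst_at ds (set_right (Node (if S is ST s then s else Leaf) b Leaf)) T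
  else if Uok && (if up then M < b else b < m) then
    Node (attachS T) b Leaf
  else if [&& Uok, (if up then b <= M else m <= b) & (if up then b < d else d < b)] then
    subst_at dds (fun t => if t is Node l x r then Node l x (Node r b Leaf) else t)
             (attachS T)
  else if [&& Uok, up, b <= M & d == b] then
    subst_at dds (fun t => if t is Node l x r then Node (Node l b Leaf) x r else t)
             (attachS T)
  else if [&& Uok, ~~ up, m <= b & d == b] then
    subst_at dds (fun t => if t is Node l x r then Node r x (Node l b Leaf) else t)
             (attachS T)
  else T.

Section Weight.
Variables (R : comNzRingType) (rho rhob lam lamb : R) (x : nat -> R).

Fixpoint w (t : btree) : R :=
  match t with
  | Leaf => 1
  | Node l a r =>
      (x a * w l * w r
       * (if isLeaf l then 1 else if (lab l <= a)%N then lamb else lam)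
       * (if isLeaf r then 1 else if (a <= lab r)%N then rhob else rho))%R
  end.

Definition wX (T : btree) (S : Sarg) (b : nat) : R :=
  let a := plab T in
  match S with
  | SD => ((if (a < b)%N then rhob else rho) * w T * x b)%R
  | SU => ((if (a < b)%N then lamb else lam) * w T * x b)%R
  | ST s => ((if (a < b)%N then lamb * rhob else lam * rho) * w T * w s * x b)%R
  end.
End Weight.

(* Main.v *)
Require Import Defs.
From mathcomp Require Import all_boot all_algebra.
From mathcomp Require Import ring zify.
Set Implicit Arguments. Unset Strict Implicit. Unset Printing Implicit Defensive.
Import GRing.Theory.

Inductive frame := FL of nat & btree | FR of btree & nat.
Definition flab f := match f with FL x _ => x | FR _ x => x end.
Definition fdir f := match f with FL _ _ => false | FR _ _ => true end.

Fixpoint plug (c : seq frame) (t : btree) : btree :=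
  match c with
  | [::] => t
  | FL x r :: c' => Node (plug c' t) x r
  | FR l x :: c' => Node l x (plug c' t)
  end.

Definition hl (c : seq frame) (y : nat) := head y (map flab c).

Definition fok (f : frame) (z : nat) : bool :=
  match f with
  | FL x r => (z == x) && ~~ isLeaf r
  | FR l x => ~~ (~~ isLeaf l && (lab l == x))
  end.

Fixpoint pathok (c : seq frame) (y : nat) : bool :=
  match c with [::] => true | f :: c' => fok f (hl c' y) && pathok c' y end.

Lemma plug_cat c1 c2 t : plug (c1 ++ c2) t = plug c1 (plug c2 t).
Proof. by elim: c1 => [|[x r|l x] c IH] //=; rewrite IH. Qed.

Lemma plug_rcons c f t : plug (rcons c f) t = plug c (plug [:: f] t).
Proof. by rewrite -cats1 plug_cat. Qed.

Lemma nonleaf_plug c t : ~~ isLeaf t -> ~~ isLeaf (plug c t).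
Proof. by case: c => [|[x r|l x] c]. Qed.

Lemma lab_plug c t : lab (plug c t) = hl c (lab t).
Proof. by case: c => [|[x r|l x] c]. Qed.

Lemma hl_cat c1 c2 y : hl (c1 ++ c2) y = hl c1 (hl c2 y).
Proof. by case: c1. Qed.

Lemma pathok_cat c1 c2 y : pathok (c1 ++ c2) y = pathok c1 (hl c2 y) && pathok c2 y.
Proof. by elim: c1 => [|f c IH] //=; rewrite IH hl_cat andbA. Qed.

Lemma pathok_rcons c f y : pathok (rcons c f) y = pathok c (flab f) && fok f y.
Proof. by rewrite -cats1 pathok_cat /= andbT. Qed.

Lemma pdirs_plug c l a : pathok c a -> pdirs (plug c (Node l a Leaf)) = map fdir c.
Proof.
elim: c => [|[x r|l' x] c IH] //=.
- move=> /andP[/andP[/eqP hx hr] /IH ->].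
  by rewrite (negbTE hr) (negbTE (nonleaf_plug _ _)) // lab_plug hx eqxx.
- move=> /andP[hf /IH ->].
  by rewrite (negbTE (nonleaf_plug _ _)) // (negbTE hf).
Qed.

Lemma plabels_plug c l a : pathok c a -> plabels (plug c (Node l a Leaf)) = map flab c ++ [:: a].
Proof.
elim: c => [|[x r|l' x] c IH] //=.
- move=> /andP[/andP[/eqP hx hr] /IH ->].
  by rewrite (negbTE hr) (negbTE (nonleaf_plug _ _)) // lab_plug hx eqxx.
- move=> /andP[hf /IH ->].
  by rewrite (negbTE (nonleaf_plug _ _)) // (negbTE hf).
Qed.

Lemma plab_plug c l a : pathok c a -> plab (plug c (Node l a Leaf)) = a.
Proof. by move=> h; rewrite /plab plabels_plug // cats1 last_rcons. Qed.

Fixpoint dec (t : btree) : seq frame * btree * nat :=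
  match t with
  | Leaf => ([::], Leaf, 0)
  | Node l x r =>
     if isLeaf r then ([::], l, x)
     else if ~~ isLeaf l && (lab l == x) then
       let: (c, l', a) := dec l in (FL x r :: c, l', a)
     else let: (c, l', a) := dec r in (FR l x :: c, l', a)
  end.

Lemma dec_plug c l a : pathok c a -> dec (plug c (Node l a Leaf)) = (c, l, a).
Proof.
elim: c => [|[x r|l' x] c IH] //=.
- move=> /andP[/andP[/eqP hx hr] /IH ->].
  by rewrite (negbTE hr) (negbTE (nonleaf_plug _ _)) // lab_plug hx eqxx.
- move=> /andP[hf /IH ->].
  by rewrite (negbTE (nonleaf_plug _ _)) // (negbTE hf).
Qed.

Lemma dec_spec t : ~~ isLeaf t ->
  let: (c, l, a) := dec t in pathok c a /\ t = plug c (Node l a Leaf).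
Proof.
elim: t => [|l IHl x r IHr] //= _.
case: ifP => [|hr]; first by case: r {IHr}.
case: ifP => hl.
- case/andP: hl => hl /eqP hx.
  move: (IHl hl); case: (dec l) => [[c l'] a] [hp hl'].
  rewrite hl' lab_plug in hx; split; last by rewrite /= -hl'.
  by rewrite /= hp hr andbT -[X in _ == X]hx eqxx.
- move: (IHr (negbT hr)); case: (dec r) => [[c l'] a] [hp ->].
  by rewrite /= hp hl.
Qed.

Definition lok (l : btree) (a : nat) (r : btree) : bool :=
  [&& 0 < a, (~~ isLeaf l && (lab l == a)) ==> (~~ isLeaf r && (lab r < a))
   & (~~ isLeaf r && (lab r == a)) ==> (~~ isLeaf l && (a < lab l))].

Lemma smirE l a r : smir (Node l a r) = [&& lok l a r, smir l & smir r].
Proof. by rewrite /= /lok !andbA. Qed.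

Definition nd z := Node Leaf z Leaf.

Lemma lok_ndl t a r : ~~ isLeaf t -> lok t a r = lok (nd (lab t)) a r.
Proof. by case: t. Qed.
Lemma lok_ndr t a l : ~~ isLeaf t -> lok l a t = lok l a (nd (lab t)).
Proof. by case: t. Qed.

Definition fsm (f : frame) (z : nat) : bool :=
  match f with
  | FL x r => lok (nd z) x r && smir r
  | FR l x => lok l x (nd z) && smir l
  end.

Fixpoint ctxsm (c : seq frame) (y : nat) : bool :=
  match c with [::] => true | f :: c' => fsm f (hl c' y) && ctxsm c' y end.

Lemma smir_plug c t : ~~ isLeaf t -> smir (plug c t) = ctxsm c (lab t) && smir t.
Proof.
move=> ht; elim: c => [|[x r|l x] c IH] //=.
- rewrite -/(smir (Node (plug c t) x r)) smirE lok_ndl ?nonleaf_plug // lab_plug IH.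
  by case: (lok _ _ _); case: (smir r); case: (ctxsm c _); case: (smir t).
- rewrite -/(smir (Node l x (plug c t))) smirE (lok_ndr _ _ (nonleaf_plug c ht)) lab_plug IH.
  by case: (lok _ _ _); case: (smir l); case: (ctxsm c _); case: (smir t).
Qed.

Lemma ctxsm_cat c1 c2 y : ctxsm (c1 ++ c2) y = ctxsm c1 (hl c2 y) && ctxsm c2 y.
Proof. by elim: c1 => [|f c IH] //=; rewrite IH hl_cat andbA. Qed.

Lemma ctxsm_rcons c f y : ctxsm (rcons c f) y = ctxsm c (flab f) && fsm f y.
Proof. by rewrite -cats1 ctxsm_cat /= andbT. Qed.

Lemma nnodes_plug c t : nnodes t <= nnodes (plug c t).
Proof. elim: c => [|[x r|l x] c IH] //=; lia. Qed.

Section Wt.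
Variables (R : comNzRingType) (rho rhob lam lamb : R) (x : nat -> R).
Local Notation W := (@w R rho rhob lam lamb x).
Local Open Scope ring_scope.

Definition lf (l : btree) a : R := if isLeaf l then 1 else if (lab l <= a)%N then lamb else lam.
Definition rf a (r : btree) : R := if isLeaf r then 1 else if (a <= lab r)%N then rhob else rho.

Lemma wE l a r : W (Node l a r) = x a * W l * W r * lf l a * rf a r.
Proof. by []. Qed.

Definition fw (f : frame) (z : nat) : R :=
  match f with
  | FL y r => x y * W r * lf (nd z) y * rf y r
  | FR l y => x y * W l * lf l y * rf y (nd z)
  end.

Fixpoint wc (c : seq frame) (y : nat) : R :=
  match c with [::] => 1 | f :: c' => fw f (hl c' y) * wc c' y end.

Lemma w_plug c t : ~~ isLeaf t -> W (plug c t) = wc c (lab t) * W t.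
Proof.
move=> ht; elim: c => [|[y r|l y] c IH] /=; first by rewrite mul1r.
- rewrite -/(W (Node (plug c t) y r)) wE IH /lf (negbTE (nonleaf_plug c ht)) lab_plug /=.
  ring.
- rewrite -/(W (Node l y (plug c t))) wE IH /rf (negbTE (nonleaf_plug c ht)) lab_plug /=.
  ring.
Qed.

Lemma wc_cat c1 c2 y : wc (c1 ++ c2) y = wc c1 (hl c2 y) * wc c2 y.
Proof. by elim: c1 => [|f c IH] /=; [rewrite mul1r | rewrite IH hl_cat mulrA]. Qed.

End Wt.

Lemma subst_plug c f t : subst_at (map fdir c) f (plug c t) = plug c (f t).
Proof. by elim: c => [|[y r|l y] c IH] //=; rewrite IH. Qed.

Fixpoint splitS (q : pred nat) (t : btree) : btree * Sarg :=
  match t with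
  | Leaf => (Leaf, SU)
  | Node l x r =>
     if isLeaf r then (t, SU)
     else if ~~ isLeaf l && (lab l == x) then
       let: (l', S0) := splitS q l in (Node l' x r, S0)
     else if q (lab r) then (Node l x Leaf, ST r)
     else let: (r', S0) := splitS q r in (Node l x r', S0)
  end.

Lemma hl_all (P : pred nat) c y : all P (map flab c) -> P y -> P (hl c y).
Proof. by case: c => [|f c] //= /andP[]. Qed.

Definition stree (S0 : Sarg) := if S0 is ST s then s else Leaf.

Lemma splitS_plug q e l a S0 : pathok e a ->
  all (fun z => ~~ q z) (map flab e) -> ~~ q a ->
  (match S0 with SD => false | SU => true
   | ST s => [&& ~~ isLeaf s, q (lab s) & fok (FR l a) 0] end) ->
  splitS q (plug e (Node l a (stree S0))) = (plug e (Node l a Leaf), S0).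
Proof.
move=> hp ha hqa hS.
have base : splitS q (Node l a (stree S0)) = (Node l a Leaf, S0).
  by case: S0 hS => [||s] //= /and3P[/negbTE -> /= -> /negbTE ->].
elim: e hp ha => [|[y r|l' y] e IH] //=.
- move=> /andP[/andP[/eqP hx hr] hp] /andP[_ ha].
  by rewrite (IH hp ha) (negbTE hr) (negbTE (nonleaf_plug _ _)) ?lab_plug /= ?hx ?eqxx //;
     case: S0 hS {base} => [||s].
- move=> /andP[hf hp] /andP[_ ha].
  have hne : ~~ isLeaf (plug e (Node l a (stree S0))) by apply: nonleaf_plug.
  rewrite (negbTE hne) (negbTE hf) lab_plug /= (negbTE (hl_all ha hqa)) (IH hp ha) //.
Qed.

Lemma splitS_spec q t : ~~ isLeaf t -> ~~ q (lab t) ->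
  let: (t', S0) := splitS q t in
  exists e l a, t' = plug e (Node l a Leaf) /\ [/\ pathok e a,
     all (fun z => ~~ q z) (map flab e), ~~ q a,
     t = plug e (Node l a (stree S0)) &
     match S0 with SD => false | SU => true
     | ST s => [&& ~~ isLeaf s, q (lab s) & fok (FR l a) 0] end].
Proof.
elim: t => [|l IHl y r IHr] //= _ hq.
case: ifP => hr.
  by case: r hr {IHr} => // _; exists [::], l, y.
case: ifP => hl.
  case/andP: hl => hl /eqP hy.
  have hql : ~~ q (lab l) by rewrite hy.
  move: (IHl hl hql); case: (splitS q l) => l' S0 [e [l0 [a [-> [hp ha hqa hl' hS]]]]].
  exists (FL y r :: e), l0, a; split => //; split => //=.
  - by rewrite hp andbT hr -hy hl' lab_plug; case: (S0) => [||s] /=; rewrite eqxx.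
  - by rewrite hq.
  - by rewrite -hl'.
case: ifP => hqr.
  by exists [::], l, y; split; split => //=; rewrite hr hqr hl.
move: (IHr (negbT hr) (negbT hqr)); case: (splitS q r) => r' S0 [e [l0 [a [-> [hp ha hqa hr' hS]]]]].
exists (FR l y :: e), l0, a; split => //; split => //=.
- by rewrite hp hl.
- by rewrite hq.
- by rewrite -hr'.
Qed.

Lemma split_last (p : pred nat) c : has p (map flab c) ->
  exists c1 f c2, [/\ c = c1 ++ f :: c2, p (flab f) & ~~ has p (map flab c2)].
Proof.
elim: c => [|f c IH] //= /orP[hf|hc].
  case hc: (has p (map flab c)).
    by case: (IH hc) => c1 [g [c2 [-> hg hn]]]; exists (f :: c1), g, c2.
  by exists [::], f, c; rewrite hc.
by case: (IH hc) => c1 [g [c2 [-> hg hn]]]; exists (f :: c1), g, c2.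
Qed.

Lemma lastidx_cat (p : pred nat) s1 z s2 : p z -> ~~ has p s2 ->
  lastidx p (s1 ++ z :: s2) = size s1.
Proof.
move=> hz hs; elim: s1 => [|y s1 IH] /=; first by rewrite (negbTE hs).
by rewrite IH has_cat /= hz orbT.
Qed.

Lemma maxn_lt (s : seq nat) b : 0 < b -> all (fun z => z < b) s -> foldr maxn 0 s < b.
Proof. move=> hb; elim: s => [|z s IH] //= /andP[hz /IH h]; lia. Qed.

Lemma maxn_ge (s : seq nat) b : has (fun z => b <= z) s -> b <= foldr maxn 0 s.
Proof. elim: s => [|z s IH] //= /orP[hz|/IH h]; lia. Qed.

Lemma minn_gt (s : seq nat) h b : b < h -> all (fun z => b < z) s -> b < foldr minn h s.
Proof. move=> hb; elim: s => [|z s IH] //= /andP[hz /IH h2]; lia. Qed.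

Lemma minn_le (s : seq nat) h b : has (fun z => z <= b) s -> foldr minn h s <= b.
Proof. elim: s => [|z s IH] //= /orP[hz|/IH h']; lia. Qed.

Ltac unfPhi hp := rewrite /Phi; cbv beta zeta;
  rewrite /pmax /pmin (plab_plug _ hp) (pdirs_plug _ hp) (plabels_plug _ hp).

Definition case1c a b S := match S with
  | SD => true | SU => false
  | ST s => (a < b) && (lab s < b) || (b < a) && (b < lab s) end.

Lemma Phi1 c l a S b : pathok c a -> case1c a b S ->
  Phi (plug c (Node l a Leaf)) S b = plug (rcons c (FR l a)) (Node (stree S) b Leaf).
Proof.
move=> hp h1; unfPhi hp; rewrite /case1c in h1; rewrite h1 subst_plug plug_rcons.
by case: S h1.
Qed.

Definition Sok (up : bool) b S := match S with SD => false | SU => true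
  | ST s => if up then b <= lab s else lab s <= b end.

Definition side (up : bool) b z := if up then z < b else b < z.

Lemma Phi2 c l a S b : pathok c a -> 0 < b -> a != b -> Sok (a < b) b S ->
  all (side (a < b) b) (map flab c) ->
  Phi (plug c (Node l a Leaf)) S b = Node (plug c (Node l a (stree S))) b Leaf.
Proof.
move=> hp hb hab hS hall; unfPhi hp.
have hall' : all (side (a < b) b) (map flab c ++ [:: a]).
  by rewrite all_cat hall /= /side andbT; case: ltngtP hab.
case: S hS => [||s] //= hS.
- case: ltngtP hab hall' => // hab' _ hall' /=.
  + by rewrite (maxn_lt hb hall').
  + by rewrite minn_gt //; case: (c) hall' => [|f c'] /= /andP[].
- rewrite hS; case: ltngtP hab hS hall' => // hab' _ hS hall' /=.
  + have -> : (lab s < b) = false by lia.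
    by rewrite /= (maxn_lt hb hall') subst_plug.
  + have -> : (b < lab s) = false by lia.
    by rewrite minn_gt ?subst_plug //; case: (c) hall' => [|f c'] /= /andP[].
Qed.

Definition oside (up : bool) b z := if up then b < z else z < b.

Lemma nth_mid (s1 s2 : seq nat) z : nth 0 (s1 ++ z :: s2) (size s1) = z.
Proof. by rewrite nth_cat ltnn subnn. Qed.

Lemma Phi345 c1 ld d c2 l a S b : pathok (c1 ++ FR ld d :: c2) a -> 0 < b -> a != b ->
  Sok (a < b) b S -> all (side (a < b) b) (map flab c2) ->
  (if a < b then b <= d else d <= b) ->
  Phi (plug (c1 ++ FR ld d :: c2) (Node l a Leaf)) S b =
  if d == b then
    (if a < b then plug (rcons c1 (FL b (plug c2 (Node l a (stree S))))) (Node ld b Leaf)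
     else plug (rcons c1 (FR (plug c2 (Node l a (stree S))) b)) (Node ld b Leaf))
  else plug (rcons c1 (FR ld d)) (Node (plug c2 (Node l a (stree S))) b Leaf).
Proof.
move=> hp hb hab hS hall hd; unfPhi hp.
have hP : map flab (c1 ++ FR ld d :: c2) ++ [:: a] = map flab c1 ++ d :: (map flab c2 ++ [:: a]).
  by rewrite map_cat -catA.
have htk : take (size c1) (map fdir (c1 ++ FR ld d :: c2)) = map fdir c1.
  by rewrite map_cat take_size_cat // size_map.
have hatt : forall f, subst_at (map fdir c1) f
    (match S with ST s => subst_at (map fdir (c1 ++ FR ld d :: c2)) (set_right s)
          (plug (c1 ++ FR ld d :: c2) (Node l a Leaf)) | _ => plug (c1 ++ FR ld d :: c2) (Node l a Leaf) end)
    = plug c1 (f (Node ld d (plug c2 (Node l a (stree S))))).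
  by move=> f; case: (S) => [||s] /=; rewrite ?subst_plug plug_cat subst_plug.
rewrite hP.
case: ltngtP hab hS hall hd => // hab' _ hS hall hd /=.
- have hnh : ~~ has [eta leq b] (map flab c2 ++ [:: a]).
    rewrite has_cat /= orbF negb_or -ltnNge hab' andbT.
    by apply/hasPn => z /(allP hall); rewrite /side /=; lia.
  have hM : b <= foldr maxn 0 (map flab c1 ++ d :: (map flab c2 ++ [:: a])).
    by apply: maxn_ge; rewrite has_cat /= hd orbT.
  rewrite (lastidx_cat (p := [eta leq b]) _ hd hnh) nth_mid size_map (leq_gtF hM) hM htk.
  case: S hS hatt => [||s] //= hS hatt.
  + case: (d =P b) => hdb.
    * rewrite (_ : (b < d) = false) ?(_ : (d == b) = true) /=; try by apply/eqP.
        by rewrite hatt plug_rcons hdb.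
      by lia.
    * rewrite (_ : (b < d) = true) ?(_ : (d == b) = false) /=; try by apply/eqP.
        by rewrite hatt plug_rcons.
      by lia.
  + rewrite (leq_gtF hS) hS /=.
    case: (d =P b) => hdb.
    * rewrite (_ : (b < d) = false) ?(_ : (d == b) = true) /=; try by apply/eqP.
        by rewrite hatt plug_rcons hdb.
      by lia.
    * rewrite (_ : (b < d) = true) ?(_ : (d == b) = false) /=; try by apply/eqP.
        by rewrite hatt plug_rcons.
      by lia.
- have hnh : ~~ has (leq^~ b) (map flab c2 ++ [:: a]).
    rewrite has_cat /= orbF negb_or -ltnNge hab' andbT.
    by apply/hasPn => z /(allP hall); rewrite /side /=; lia.
  have hm : foldr minn (head 0 (map flab c1 ++ d :: (map flab c2 ++ [:: a])))
              (map flab c1 ++ d :: (map flab c2 ++ [:: a])) <= b.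
    by apply: minn_le; rewrite has_cat /= hd orbT.
  rewrite (lastidx_cat (p := leq^~ b) _ hd hnh) nth_mid size_map (leq_gtF hm) hm htk.
  case: S hS hatt => [||s] //= hS hatt.
  + case: (d =P b) => hdb.
    * rewrite (_ : (d < b) = false) ?(_ : (d == b) = true) /=; try by apply/eqP.
        by rewrite hatt plug_rcons hdb.
      by lia.
    * rewrite (_ : (d < b) = true) ?(_ : (d == b) = false) /=; try by apply/eqP.
        by rewrite hatt plug_rcons.
      by lia.
  + rewrite (leq_gtF hS) hS /=.
    case: (d =P b) => hdb.
    * rewrite (_ : (d < b) = false) ?(_ : (d == b) = true) /=; try by apply/eqP.
        by rewrite hatt plug_rcons hdb.
      by lia.
    * rewrite (_ : (d < b) = true) ?(_ : (d == b) = false) /=; try by apply/eqP.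
        by rewrite hatt plug_rcons.
      by lia.
Qed.

Definition unsnoc (c : seq frame) : option (seq frame * frame) :=
  match rev c with [::] => None | f :: r => Some (rev r, f) end.

Lemma unsnoc_rcons c f : unsnoc (rcons c f) = Some (c, f).
Proof. by rewrite /unsnoc rev_rcons revK. Qed.

Lemma unsnoc_nil : unsnoc [::] = None.
Proof. by []. Qed.

Lemma unsnocP c : match unsnoc c with None => c = [::] | Some (c1, f) => c = rcons c1 f end.
Proof.
rewrite /unsnoc; case E: (rev c) => [|f r].
  by rewrite -[c]revK E.
by rewrite -[c]revK E rev_cons.
Qed.

Definition qof (up : bool) b : pred nat := if up then (fun z => b <= z) else (fun z => z <= b).

Definition Psi (U : btree) : btree * Sarg * nat :=
  let: (c', l', b) := dec U in
  match unsnoc c' with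
  | None => let: (T, S0) := splitS (qof (lab l' < b) b) l' in (T, S0, b)
  | Some (c1, FL x R) =>
      let: (R', S0) := splitS (qof true b) R in (plug c1 (Node l' b R'), S0, b)
  | Some (c1, FR L y) =>
     if y == b then let: (R', S0) := splitS (qof false b) L in (plug c1 (Node l' b R'), S0, b)
     else if isLeaf l' || ((lab l' < b) == (y < b)) then
       (plug c1 (Node L y Leaf), (if isLeaf l' then SD else ST l'), b)
     else let: (R', S0) := splitS (qof (b < y) b) l' in (plug c1 (Node L y R'), S0, b)
  end.

Lemma smirnov_plug c l a r : smirnov (plug c (Node l a r)) = ctxsm c a && smir (Node l a r).
Proof. by rewrite /smirnov nonleaf_plug // smir_plug. Qed.

Lemma smirnovT c l a : smirnov (plug c (Node l a Leaf)) = [&& ctxsm c a, 0 < a, fok (FR l a) 0 & smir l].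
Proof.
rewrite smirnov_plug smirE /lok /= !implybF !andbT.
by case: (ctxsm c a); case: (0 < a); case: (~~ isLeaf l && _).
Qed.

Definition Sgood S := if S is ST s then smirnov s else true.

Lemma L1 c l a S b : pathok c a -> smirnov (plug c (Node l a Leaf)) -> Sgood S -> 0 < b -> a != b ->
  case1c a b S ->
  [/\ smirnov (plug (rcons c (FR l a)) (Node (stree S) b Leaf)),
      2 <= nnodes (plug (rcons c (FR l a)) (Node (stree S) b Leaf)),
      plab (plug (rcons c (FR l a)) (Node (stree S) b Leaf)) = b &
      Psi (plug (rcons c (FR l a)) (Node (stree S) b Leaf)) = (plug c (Node l a Leaf), S, b)].
Proof.
move=> hp; rewrite smirnovT => /and4P[hc ha hf hl] hS hb hab h1.
have hp' : pathok (rcons c (FR l a)) b by rewrite pathok_rcons hp.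
split.
- rewrite smirnov_plug ctxsm_rcons hc /= /lok /= ha hl (negbTE hf) /=.
  rewrite eq_sym (negbTE hab) hb /= implybF andbT.
  case: S hS h1 => [||s] //= /andP[hs1 hs2] h1; rewrite hs1 hs2 /= andbT; apply/eqP; lia.
- by rewrite plug_rcons /=; apply: leq_trans (nnodes_plug _ _); rewrite /= ; lia.
- by rewrite plab_plug.
- rewrite /Psi dec_plug // unsnoc_rcons (negbTE hab).
  case: S hS h1 => [||s] //= /andP[hs1 hs2] h1.
  rewrite (negbTE hs1) /=.
  have -> // : (lab s < b) == (a < b).
  case/orP: h1 => /andP[h2 h3]; apply/eqP; first by rewrite h2 h3.
  have e1 : (lab s < b) = false by lia.
  have e2 : (a < b) = false by lia.
  by rewrite e1 e2.
Qed.

Lemma smirnov_Node l a r : smirnov (Node l a r) = [&& lok l a r, smir l & smir r].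
Proof. by rewrite /smirnov smirE. Qed.

Lemma side_q up b z : side up b z -> ~~ qof up b z.
Proof. by case: up => /=; rewrite /side; lia. Qed.

Lemma side_all_q up b s : all (side up b) s -> all (fun z => ~~ qof up b z) s.
Proof. by apply: sub_all => z; apply: side_q. Qed.

Lemma side_ab a b : a != b -> side (a < b) b a.
Proof. by rewrite /side; case: ltngtP. Qed.

Lemma side_neq up b z : side up b z -> (z == b) = false.
Proof. by case: up; rewrite /side; lia. Qed.

Lemma Sok_q up b S : Sok up b S -> match S with SD => false | SU => true
   | ST s => qof up b (lab s) end.
Proof. by case: S => //= s; case: up. Qed.

Lemma smir_att l a S b : 0 < a -> fok (FR l a) 0 -> smir l -> Sgood S -> a != b ->
  Sok (a < b) b S -> smir (Node l a (stree S)).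
Proof.
move=> ha hf hl hS hab hSo; rewrite smirE /lok ha hl (negbTE hf) /=.
case: S hS hSo => [||s] //= /andP[hs1 hs2]; rewrite hs1 hs2 andbT /=.
by case: ltngtP hab => // h0 _ h; have -> : (lab s == a) = false by lia.
Qed.

Lemma L2 c l a S b : pathok c a -> smirnov (plug c (Node l a Leaf)) -> Sgood S -> 0 < b -> a != b ->
  Sok (a < b) b S -> all (side (a < b) b) (map flab c) ->
  [/\ smirnov (Node (plug c (Node l a (stree S))) b Leaf),
      2 <= nnodes (Node (plug c (Node l a (stree S))) b Leaf),
      plab (Node (plug c (Node l a (stree S))) b Leaf) = b &
      Psi (Node (plug c (Node l a (stree S))) b Leaf) = (plug c (Node l a Leaf), S, b)].
Proof.
move=> hp; rewrite smirnovT => /and4P[hc ha hf hsl] hS hb hab hSo hall.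
have hsa := side_ab hab.
have hh : side (a < b) b (hl c a) by apply: hl_all.
split.
- rewrite smirnov_Node /lok hb /= (nonleaf_plug _ _) //= lab_plug /= (side_neq hh) /=.
  by rewrite smir_plug // hc (smir_att ha hf hsl hS hab hSo).
- by rewrite /=; move: (nonleaf_plug c (isT : ~~ isLeaf (Node l a (stree S)))); case: (plug _ _).
- by [].
- rewrite /Psi (dec_plug (c := [::])) //= lab_plug /=.
  have -> : (hl c a < b) = (a < b) by move: hh; rewrite /side; case: ltngtP hab; lia.
  rewrite splitS_plug //; first exact: side_all_q.
  + exact: side_q.
  + by case: S hS hSo => [||s] //= /andP[hs1 _] hq; rewrite hs1 (negbTE hf) andbT /=; case: (a < b) hq.
Qed.

Lemma nn2r c l x l' y r : 2 <= nnodes (plug c (Node l x (Node l' y r))).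
Proof. by apply: leq_trans (nnodes_plug _ _); rewrite /=; lia. Qed.

Lemma nn2l c l x l' y r : 2 <= nnodes (plug c (Node (Node l' y r) x l)).
Proof. by apply: leq_trans (nnodes_plug _ _); rewrite /=; lia. Qed.

Lemma oside_neq up b d : oside up b d -> (d == b) = false.
Proof. by case: up => /= h; lia. Qed.

Lemma side_oside_ne up b h d : side up b h -> oside up b d -> ((h < b) == (d < b)) = false.
Proof. by case: up => /= h1 h2; apply/negbTE; case: ltngtP h1; case: ltngtP h2; lia. Qed.

Lemma oside_up a b d : a != b -> oside (a < b) b d -> (b < d) = (a < b).
Proof. by case: ltngtP => //= h1 _ h2; lia. Qed.

Lemma facts345 c1 ld d c2 l a : pathok (c1 ++ FR ld d :: c2) a ->
  smirnov (plug (c1 ++ FR ld d :: c2) (Node l a Leaf)) ->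
  [/\ pathok c1 d, pathok c2 a, fok (FR ld d) 0, ctxsm c1 d & ctxsm c2 a] /\
  [/\ 0 < d, smir ld, 0 < a, fok (FR l a) 0 & smir l].
Proof.
rewrite pathok_cat smirnovT ctxsm_cat /= => /and3P[h1 h2 h3] /and4P[/and3P[h4 /andP[h5 h6] h7] h8 h9 h10].
by move: h5; rewrite /lok => /and3P[h5 _ _].
Qed.

Lemma smirR c2 l a S b : ctxsm c2 a -> 0 < a -> fok (FR l a) 0 -> smir l -> Sgood S -> a != b ->
  Sok (a < b) b S -> smir (plug c2 (Node l a (stree S))).
Proof. by move=> h1 h2 h3 h4 h5 h6 h7; rewrite smir_plug // h1 (smir_att h2 h3 h4 h5 h6 h7). Qed.

Lemma psi_split c2 l a S b : pathok c2 a -> a != b -> fok (FR l a) 0 -> Sgood S ->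
  Sok (a < b) b S -> all (side (a < b) b) (map flab c2) ->
  splitS (qof (a < b) b) (plug c2 (Node l a (stree S))) = (plug c2 (Node l a Leaf), S).
Proof.
move=> hp hab hf hS hSo hall; rewrite splitS_plug //; first exact: side_all_q.
- exact/side_q/side_ab.
- by case: S hS hSo => [||s] //= /andP[hs1 _] hq; rewrite hs1 (negbTE hf) andbT /=; case: (a < b) hq.
Qed.

Lemma L3 c1 ld d c2 l a S b : pathok (c1 ++ FR ld d :: c2) a ->
  smirnov (plug (c1 ++ FR ld d :: c2) (Node l a Leaf)) -> Sgood S -> 0 < b -> a != b ->
  Sok (a < b) b S -> all (side (a < b) b) (map flab c2) ->
  oside (a < b) b d ->
  let U := plug (rcons c1 (FR ld d)) (Node (plug c2 (Node l a (stree S))) b Leaf) in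
  [/\ smirnov U, 2 <= nnodes U, plab U = b &
      Psi U = (plug (c1 ++ FR ld d :: c2) (Node l a Leaf), S, b)].
Proof.
move=> hp hT hS hb hab hSo hall hd U.
have [[p1 p2 f1 c1s c2s] [hd0 sld ha hf hsl]] := facts345 hp hT.
have hh : side (a < b) b (hl c2 a) by apply: hl_all => //; apply: side_ab.
have hdb : (d == b) = false by apply: oside_neq hd.
have hpU : pathok (rcons c1 (FR ld d)) b by rewrite pathok_rcons p1.
split.
- rewrite /U smirnov_plug ctxsm_rcons c1s /= /lok hd0 sld (negbTE f1) eq_sym hdb /=.
  rewrite hb (nonleaf_plug _ _) //= lab_plug /= (side_neq hh) /= andbT.
  exact: (smirR c2s ha hf hsl hS hab hSo).
- by rewrite /U plug_rcons /=; apply: nn2r || apply: nn2l.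
- exact: plab_plug.
- rewrite /U /Psi dec_plug // unsnoc_rcons hdb (negbTE (nonleaf_plug _ _)) //= lab_plug /=.
  have -> : ((hl c2 a < b) == (d < b)) = false.
    exact: side_oside_ne hh hd.
  rewrite (oside_up hab hd).
  by rewrite psi_split // plug_cat.
Qed.

Lemma L4 c1 ld c2 l a S b : pathok (c1 ++ FR ld b :: c2) a ->
  smirnov (plug (c1 ++ FR ld b :: c2) (Node l a Leaf)) -> Sgood S -> 0 < b -> a < b ->
  Sok true b S -> all (side true b) (map flab c2) ->
  let U := plug (rcons c1 (FL b (plug c2 (Node l a (stree S))))) (Node ld b Leaf) in
  [/\ smirnov U, 2 <= nnodes U, plab U = b &
      Psi U = (plug (c1 ++ FR ld b :: c2) (Node l a Leaf), S, b)].
Proof.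
move=> hp hT hS hb hab hSo hall U.
have hab' : a != b by rewrite neq_ltn hab.
have [[p1 p2 f1 c1s c2s] [hd0 sld ha hf hsl]] := facts345 hp hT.
have hh : side true b (hl c2 a) by apply: hl_all => //; rewrite /side.
have hpU : pathok (rcons c1 (FL b (plug c2 (Node l a (stree S))))) b.
  by rewrite pathok_rcons p1 /= eqxx nonleaf_plug.
split.
- rewrite /U smirnov_plug ctxsm_rcons c1s /= /lok hb eqxx /= (nonleaf_plug _ _) //= lab_plug /=.
  have hh' : hl c2 a < b := hh.
  rewrite (side_neq hh) hh' /= (negbTE f1) sld /= !andbT.
  by have := smirR c2s ha hf hsl hS hab'; rewrite hab; apply.
- by rewrite /U plug_rcons /=; apply: nn2r || apply: nn2l.
- exact: plab_plug.
- rewrite /U /Psi dec_plug // unsnoc_rcons.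
  have := psi_split p2 hab' hf hS; rewrite hab => -> //.
  by rewrite plug_cat.
Qed.

Lemma L5 c1 ld c2 l a S b : pathok (c1 ++ FR ld b :: c2) a ->
  smirnov (plug (c1 ++ FR ld b :: c2) (Node l a Leaf)) -> Sgood S -> 0 < b -> b < a ->
  Sok false b S -> all (side false b) (map flab c2) ->
  let U := plug (rcons c1 (FR (plug c2 (Node l a (stree S))) b)) (Node ld b Leaf) in
  [/\ smirnov U, 2 <= nnodes U, plab U = b &
      Psi U = (plug (c1 ++ FR ld b :: c2) (Node l a Leaf), S, b)].
Proof.
move=> hp hT hS hb hab hSo hall U.
have hab' : a != b by rewrite neq_ltn hab orbT.
have hab2 : (a < b) = false by apply: leq_gtF (ltnW hab).
have [[p1 p2 f1 c1s c2s] [hd0 sld ha hf hsl]] := facts345 hp hT.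
have hh : side false b (hl c2 a) by apply: hl_all => //; rewrite /side.
have hpU : pathok (rcons c1 (FR (plug c2 (Node l a (stree S))) b)) b.
  by rewrite pathok_rcons p1 /= lab_plug /= (side_neq hh) andbF.
split.
- rewrite /U smirnov_plug ctxsm_rcons c1s /= /lok hb eqxx /= (nonleaf_plug _ _) //= lab_plug /=.
  have hh' : b < hl c2 a := hh.
  rewrite (side_neq hh) hh' /= (negbTE f1) sld /= !andbT.
  by have := smirR c2s ha hf hsl hS hab'; rewrite hab2; apply.
- by rewrite /U plug_rcons /=; apply: nn2r || apply: nn2l.
- exact: plab_plug.
- rewrite /U /Psi dec_plug // unsnoc_rcons eqxx.
  have := psi_split p2 hab' hf hS; rewrite hab2 => -> //.
  by rewrite plug_cat.
Qed.

Lemma side_le a b h : a != b -> side (a < b) b h -> (h <= b) = (a < b).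
Proof. by rewrite /side; case: ltngtP => //= h1 _ h2; lia. Qed.

Lemma sok_le a b s : a != b -> Sok (a < b) b (ST s) -> (a <= lab s) = (a < b).
Proof. by rewrite /Sok; case: ltngtP => //= h1 _ h2; lia. Qed.

Lemma oside_le1 a b d : a != b -> oside (a < b) b d -> (d <= b) = ~~ (a < b).
Proof. by rewrite /oside; case: ltngtP => //= h1 _ h2; lia. Qed.

Lemma oside_le2 a b d h : a != b -> oside (a < b) b d -> side (a < b) b h -> (d <= h) = ~~ (a < b).
Proof. by rewrite /oside /side; case: ltngtP => //= h1 _ h2 h3; lia. Qed.

Section Wt2.
Variables (R : comNzRingType) (rho rhob lam lamb : R) (x : nat -> R).
Local Notation W := (@w R rho rhob lam lamb x).
Local Notation wX := (@wX R rho rhob lam lamb x).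
Local Notation wc := (@wc R rho rhob lam lamb x).
Local Open Scope ring_scope.

Lemma W1 c l a S b : pathok c a -> Sgood S -> a != b -> case1c a b S ->
  W (plug (rcons c (FR l a)) (Node (stree S) b Leaf)) = wX (plug c (Node l a Leaf)) S b.
Proof.
move=> hp hS hab h1; rewrite /wX plab_plug // plug_rcons /= !w_plug //= /lf /rf /=.
have e : (a <= b)%N = (a < b)%N by rewrite leq_eqVlt (negbTE hab).
rewrite e.
case: S hS h1 => [||s] /=.
- by move=> _ _; case: (a < b)%N; ring.
- by [].
move=> /andP[hs1 _] h1; rewrite (negbTE hs1).
case/orP: h1 => /andP[h2 h3].
- by rewrite h2 (ltnW h3); ring.
- by rewrite (leq_gtF (ltnW h2)) (ltn_geF h3); ring.
Qed.

Lemma W2 c l a S b : pathok c a -> Sgood S -> a != b -> Sok (a < b)%N b S ->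
  all (side (a < b)%N b) (map flab c) ->
  W (Node (plug c (Node l a (stree S))) b Leaf) = wX (plug c (Node l a Leaf)) S b.
Proof.
move=> hp hS hab hSo hall.
have hh : side (a < b)%N b (hl c a) by apply: hl_all => //; apply: side_ab.
have hne := nonleaf_plug c (isT : ~~ isLeaf (Node l a (stree S))).
rewrite /wX plab_plug //= (negbTE hne) !w_plug //= lab_plug /= /lf /rf /=.
rewrite (side_le hab hh).
case: S hS hSo {hne} => [||s] //= hS hSo.
- by case: (a < b)%N; ring.
- case/andP: hS => hs1 _; rewrite (negbTE hs1) (sok_le hab hSo).
  by case: (a < b)%N; ring.
Qed.

Lemma W3 c1 ld d c2 l a S b : pathok (c1 ++ FR ld d :: c2) a -> Sgood S -> a != b ->
  Sok (a < b)%N b S -> all (side (a < b)%N b) (map flab c2) -> oside (a < b)%N b d ->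
  W (plug (rcons c1 (FR ld d)) (Node (plug c2 (Node l a (stree S))) b Leaf)) =
  wX (plug (c1 ++ FR ld d :: c2) (Node l a Leaf)) S b.
Proof.
move=> hp hS hab hSo hall hd.
have hh : side (a < b)%N b (hl c2 a) by apply: hl_all => //; apply: side_ab.
have hne := nonleaf_plug c2 (isT : ~~ isLeaf (Node l a (stree S))).
have hne0 := nonleaf_plug c2 (isT : ~~ isLeaf (Node l a Leaf)).
rewrite /wX plab_plug // plug_rcons plug_cat /= !w_plug //= (negbTE hne) (negbTE hne0) !w_plug //= !lab_plug /= /lf /rf /=.
rewrite (side_le hab hh) (oside_le1 hab hd) (oside_le2 hab hd hh).
case: S hS hSo {hne} => [||s] //= hS hSo.
- by case: (a < b)%N; ring.
- case/andP: hS => hs1 _; rewrite (negbTE hs1) (sok_le hab hSo).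
  by case: (a < b)%N; ring.
Qed.

Lemma W4 c1 ld c2 l a S b : pathok (c1 ++ FR ld b :: c2) a -> Sgood S -> (a < b)%N ->
  Sok true b S -> all (side true b) (map flab c2) ->
  W (plug (rcons c1 (FL b (plug c2 (Node l a (stree S))))) (Node ld b Leaf)) =
  wX (plug (c1 ++ FR ld b :: c2) (Node l a Leaf)) S b.
Proof.
move=> hp hS hab hSo hall.
have hab' : a != b by rewrite neq_ltn hab.
have hh : side true b (hl c2 a) by apply: hl_all => //; rewrite /side.
have hh1 : (b <= hl c2 a)%N = false by apply: ltn_geF.
have hne := nonleaf_plug c2 (isT : ~~ isLeaf (Node l a (stree S))).
have hne0 := nonleaf_plug c2 (isT : ~~ isLeaf (Node l a Leaf)).
rewrite /wX plab_plug // plug_rcons plug_cat /= !w_plug //= (negbTE hne) (negbTE hne0) !w_plug //= !lab_plug /= /lf /rf /=.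
rewrite hab hh1 leqnn.
case: S hS hSo {hne} => [||s] //= hS hSo.
- by ring.
- case/andP: hS => hs1 _; rewrite (negbTE hs1) (leq_trans (ltnW hab) hSo).
  by ring.
Qed.

Lemma W5 c1 ld c2 l a S b : pathok (c1 ++ FR ld b :: c2) a -> Sgood S -> (b < a)%N ->
  Sok false b S -> all (side false b) (map flab c2) ->
  W (plug (rcons c1 (FR (plug c2 (Node l a (stree S))) b)) (Node ld b Leaf)) =
  wX (plug (c1 ++ FR ld b :: c2) (Node l a Leaf)) S b.
Proof.
move=> hp hS hab hSo hall.
have hh : side false b (hl c2 a) by apply: hl_all => //; rewrite /side.
have hh1 : (hl c2 a <= b)%N = false by apply: ltn_geF.
have hh2 : (b <= hl c2 a)%N by apply: ltnW.
have hab2 : (a < b)%N = false by apply: leq_gtF (ltnW hab).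
have hne := nonleaf_plug c2 (isT : ~~ isLeaf (Node l a (stree S))).
have hne0 := nonleaf_plug c2 (isT : ~~ isLeaf (Node l a Leaf)).
rewrite /wX plab_plug // plug_rcons plug_cat /= !w_plug //= (negbTE hne) (negbTE hne0) !w_plug //= !lab_plug /= /lf /rf /=.
rewrite hab2 hh1 hh2 leqnn.
case: S hS hSo {hne} => [||s] //= hS hSo.
- by ring.
- case/andP: hS => hs1 _; rewrite (negbTE hs1).
  have -> : (a <= lab s)%N = false by apply: ltn_geF; apply: leq_ltn_trans hSo hab.
  by ring.
Qed.
End Wt2.

Lemma q_side up b z : ~~ qof up b z = side up b z.
Proof. by case: up; rewrite /side /=; lia. Qed.

Lemma side_up up b z : side up b z -> (z < b) = up.
Proof. by case: up; rewrite /side /=; lia. Qed.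

Lemma spl up b R : ~~ isLeaf R -> smir R -> side up b (lab R) ->
  let: (T', S0) := splitS (qof up b) R in
  exists e l0 a0, [/\ T' = plug e (Node l0 a0 Leaf), R = plug e (Node l0 a0 (stree S0)),
     pathok e a0, smirnov T' & Sgood S0] /\
     [/\ side up b a0, all (side up b) (map flab e) & Sok up b S0].
Proof.
move=> hne hs hsd.
have := splitS_spec (q := qof up b) hne; rewrite q_side => /(_ hsd).
case: splitS => T' S0 [e [l0 [a0 [-> [hp ha hqa hR hS]]]]].
exists e, l0, a0.
have hsa : side up b a0 by rewrite -q_side.
have hall : all (side up b) (map flab e) by apply: sub_all ha => z; rewrite q_side.
move: hs; rewrite hR smir_plug // => /andP[hc hN]; rewrite /= in hc.
move: hN; rewrite smirE => /and3P[hlk hl0 hs0].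
split; last first.
  split => //; case: S0 hS {hR hlk hs0} => [||s] //= /and3P[_ h _]; by case: (up) h hsa.
split => //.
- rewrite smirnovT hc hl0 andbT.
  move: hlk; rewrite /lok => /and3P[-> h1 _] /=.
  case: S0 hS h1 {hR hs0} => [||s] /=; first by [].
  + by rewrite implybF.
  + by case/and3P.
- by case: S0 hS hs0 {hR hlk} => [||s] //= /and3P[h1 _ _] h2; rewrite /smirnov h1.
Qed.

Lemma lok_leaf L y : lok L y Leaf -> (0 < y) && fok (FR L y) 0.
Proof. by rewrite /lok /= implybF andbT. Qed.

Lemma pathok_join c1 L y e a0 : pathok c1 y -> fok (FR L y) 0 -> pathok e a0 ->
  pathok (c1 ++ FR L y :: e) a0.
Proof. by move=> h1 h2 h3; rewrite pathok_cat /= h1 h3 andbT. Qed.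

Lemma smirnov_join c1 L y e l0 a0 : ctxsm c1 y -> 0 < y -> fok (FR L y) 0 -> smir L ->
  (hl e a0 == y) = false -> smirnov (plug e (Node l0 a0 Leaf)) ->
  smirnov (plug (c1 ++ FR L y :: e) (Node l0 a0 Leaf)).
Proof.
move=> h1 h2 h3 h4 h5; rewrite !smirnovT ctxsm_cat /= h1 h4 /lok h2 (negbTE h3) h5 /=.
by [].
Qed.

Lemma side_self z b : z != b -> side (z < b) b z.
Proof. by rewrite /side; case: ltngtP. Qed.

Lemma RA l' b : ~~ isLeaf l' -> smir l' -> 0 < b -> lab l' != b ->
  let: (T, S0) := splitS (qof (lab l' < b) b) l' in
  inX T S0 b /\ Phi T S0 b = Node l' b Leaf.
Proof.
move=> hne hs hb hlb.
have := spl hne hs (side_self hlb).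
case: splitS => T' S0 [e [l0 [a0 [[-> hR hp hT hS] [hsa hall hSo]]]]].
rewrite -(side_up hsa) in hall hSo.
have hab : a0 != b by apply/eqP => e0; move: hsa; rewrite e0 /side; case: (_ < b); rewrite ltnn.
split; last by rewrite (Phi2 l0 hp hb hab hSo hall) -hR.
by split; [exact: hT | case: (S0) hS | exact: hb | rewrite plab_plug].
Qed.

Lemma hl_side up b e a0 : side up b a0 -> all (side up b) (map flab e) ->
  (hl e a0 == b) = false.
Proof. by move=> h1 h2; apply: (side_neq (up := up)); apply: (hl_all (P := side up b)). Qed.

Lemma RB c1 R l' b : pathok c1 b -> ~~ isLeaf R -> ctxsm c1 b -> lok (nd b) b R -> smir R ->
  lok l' b Leaf -> smir l' ->
  let: (R', S0) := splitS (qof true b) R in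
  inX (plug c1 (Node l' b R')) S0 b /\
  Phi (plug c1 (Node l' b R')) S0 b = plug (rcons c1 (FL b R)) (Node l' b Leaf).
Proof.
move=> hp hne hc hlk hsR hlk' hsl.
have /andP[hb hf] := lok_leaf hlk'.
have hRb : side true b (lab R).
  by move: hlk; rewrite /lok /= eqxx /= => /and3P[_ /andP[_ h] _].
have := spl hne hsR hRb.
case: splitS => R' S0 [e [l0 [a0 [[-> hR hp' hT hS] [hsa hall hSo]]]]].
have hab : a0 < b := hsa.
have hab' : a0 != b by rewrite neq_ltn hab.
rewrite (_ : plug c1 (Node l' b (plug e (Node l0 a0 Leaf))) =
             plug (c1 ++ FR l' b :: e) (Node l0 a0 Leaf)); last by rewrite plug_cat.
have hpj := pathok_join hp hf hp'.
have hSo' : Sok (a0 < b) b S0 by rewrite hab.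
have hall' : all (side (a0 < b) b) (map flab e) by rewrite hab.
split.
  split; [exact: (smirnov_join hc hb hf hsl (hl_side hsa hall) hT) | by case: (S0) hS
         | exact: hb | by rewrite plab_plug].
rewrite (Phi345 l0 hpj hb hab' hSo' hall'); last by rewrite hab.
by rewrite eqxx hab -hR.
Qed.

Lemma RC c1 L l' b : pathok c1 b -> ctxsm c1 b -> lok L b (nd b) -> smir L ->
  lok l' b Leaf -> smir l' ->
  let: (R', S0) := splitS (qof false b) L in
  inX (plug c1 (Node l' b R')) S0 b /\
  Phi (plug c1 (Node l' b R')) S0 b = plug (rcons c1 (FR L b)) (Node l' b Leaf).
Proof.
move=> hp hc hlk hsR hlk' hsl.
have /andP[hb hf] := lok_leaf hlk'.
have /andP[hne hRb] : ~~ isLeaf L && side false b (lab L).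
  by move: hlk; rewrite /lok /= eqxx /= => /and3P[_ _ h].
have := spl hne hsR hRb.
case: splitS => R' S0 [e [l0 [a0 [[-> hR hp' hT hS] [hsa hall hSo]]]]].
have hab : b < a0 := hsa.
have hab2 : (a0 < b) = false by apply: leq_gtF (ltnW hab).
have hab' : a0 != b by rewrite neq_ltn hab orbT.
rewrite (_ : plug c1 (Node l' b (plug e (Node l0 a0 Leaf))) =
             plug (c1 ++ FR l' b :: e) (Node l0 a0 Leaf)); last by rewrite plug_cat.
have hpj := pathok_join hp hf hp'.
have hSo' : Sok (a0 < b) b S0 by rewrite hab2.
have hall' : all (side (a0 < b) b) (map flab e) by rewrite hab2.
split.
  split; [exact: (smirnov_join hc hb hf hsl (hl_side hsa hall) hT) | by case: (S0) hS
         | exact: hb | by rewrite plab_plug].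
rewrite (Phi345 l0 hpj hb hab' hSo' hall'); last by rewrite hab2.
by rewrite eqxx hab2 -hR.
Qed.

Lemma lok_nd_pos L y z : lok L y (nd z) -> 0 < y.
Proof. by case/and3P. Qed.

Lemma dummy_RD : True. Proof. by []. Qed.

Lemma RD c1 L y l' b : pathok c1 y -> fok (FR L y) 0 -> ctxsm c1 y -> lok L y (nd b) -> smir L ->
  lok l' b Leaf -> smir l' -> y != b -> isLeaf l' || ((lab l' < b) == (y < b)) ->
  inX (plug c1 (Node L y Leaf)) (if isLeaf l' then SD else ST l') b /\
  Phi (plug c1 (Node L y Leaf)) (if isLeaf l' then SD else ST l') b =
    plug (rcons c1 (FR L y)) (Node l' b Leaf).
Proof.
move=> hp hf hc hlk hsL hlk' hsl hyb hcase.
have hy := lok_nd_pos hlk.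
have /andP[hb hf'] := lok_leaf hlk'.
split.
  split => //.
  - by rewrite smirnovT hc hy hf hsL.
  - by case: (l') hsl => //= l1 x r1 h; rewrite /smirnov /= h.
  - by rewrite plab_plug.
rewrite Phi1 //; last first.
  case: (l') hcase hf' => //= l1 x r1; rewrite /case1c /=.
  by move: hyb; case: (ltngtP x b); case: (ltngtP y b).
by case: (l').
Qed.

Lemma side_other b y h : y != b -> side (b < y) b h -> (h == y) = false.
Proof. by rewrite /side; case: ltngtP => //= h1 _ h2; lia. Qed.

Lemma side_l' l' b y : y != b -> lab l' != b -> ((lab l' < b) == (y < b)) = false -> side (b < y) b (lab l').
Proof. by rewrite /side; case: (ltngtP (lab l') b); case: (ltngtP y b). Qed.

Lemma RE c1 L y l' b : pathok c1 y -> fok (FR L y) 0 -> ctxsm c1 y -> lok L y (nd b) -> smir L ->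
  lok l' b Leaf -> smir l' -> y != b -> ~~ isLeaf l' -> ((lab l' < b) == (y < b)) = false ->
  let: (R', S0) := splitS (qof (b < y) b) l' in
  inX (plug c1 (Node L y R')) S0 b /\
  Phi (plug c1 (Node L y R')) S0 b = plug (rcons c1 (FR L y)) (Node l' b Leaf).
Proof.
move=> hp hf hc hlk hsL hlk' hsl hyb hne hcase.
have hy := lok_nd_pos hlk.
have /andP[hb hf'] := lok_leaf hlk'.
have hlb : lab l' != b by move: hf'; rewrite /fok hne /=.
have := spl hne hsl (side_l' hyb hlb hcase).
case: splitS => R' S0 [e [l0 [a0 [[-> hR hp' hT hS] [hsa hall hSo]]]]].
have hup := side_up hsa.
have hab' : a0 != b by apply/negbT; apply: (side_neq hsa).
rewrite (_ : plug c1 (Node L y (plug e (Node l0 a0 Leaf))) =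
             plug (c1 ++ FR L y :: e) (Node l0 a0 Leaf)); last by rewrite plug_cat.
have hpj := pathok_join hp hf hp'.
have hSo' : Sok (a0 < b) b S0 by rewrite hup.
have hall' : all (side (a0 < b) b) (map flab e) by rewrite hup.
have hhy : (hl e a0 == y) = false.
  by apply: side_other hyb _; apply: (hl_all (P := side (b < y) b)).
split.
  split; [exact: (smirnov_join hc hy hf hsL hhy hT) | by case: (S0) hS
         | exact: hb | by rewrite plab_plug].
rewrite (Phi345 l0 hpj hb hab' hSo' hall'); last by rewrite hup; case: ltngtP hyb.
by rewrite (negbTE hyb) -hR.
Qed.

Lemma not_case1_Sok a b S : a != b -> case1c a b S = false -> Sok (a < b) b S.
Proof.
case: S => //= s hab /negbT; rewrite negb_or !negb_and.
by case: ltngtP hab => //= h _; rewrite ?andbT -?leqNgt -?ltnNge.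
Qed.

Lemma nhas_q up b s : ~~ has (qof up b) s = all (side up b) s.
Proof. by rewrite -all_predC; apply: eq_all => z; rewrite /= q_side. Qed.

Lemma nall_has up b s : ~~ all (side up b) s -> has (qof up b) s.
Proof. by rewrite -nhas_q negbK. Qed.

Definition WP T S b := forall (R : comNzRingType) (rho rhob lam lamb : R) (x : nat -> R),
      w rho rhob lam lamb x (Phi T S b) = wX rho rhob lam lamb x T S b.

Lemma left_all T S b : inX T S b ->
  [/\ smirnov (Phi T S b), 2 <= nnodes (Phi T S b), plab (Phi T S b) = b &
      Psi (Phi T S b) = (T, S, b)] /\ WP T S b.
Proof.
case=> hT hS hb hab.
have hne : ~~ isLeaf T by case/andP: hT.
move: (dec_spec hne); case: (dec T) => [[c l] a] [hp eT].
subst T; clear hne; rewrite plab_plug // in hab.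
have hS' : Sgood S by case: (S) hS.
case h1: (case1c a b S).
  rewrite /WP (Phi1 l hp h1); split; first exact: L1.
  by move=> R rho rhob lam lamb x; apply: W1.
have hSo := not_case1_Sok hab h1.
case hall: (all (side (a < b) b) (map flab c)).
  rewrite /WP (Phi2 l hp hb hab hSo hall); split; first exact: L2.
  by move=> R rho rhob lam lamb x; apply: W2.
have := split_last (nall_has (negbT hall)).
case=> c1 [f [c2 [ec hf hn]]].
rewrite nhas_q in hn; subst c.
case: f hf hp hT hall => [x r | ld d] /= hf hp hT _.
  exfalso; move: hp; rewrite pathok_cat /= => /and3P[_ /andP[/eqP hx _] _].
  have : side (a < b) b (hl c2 a) by apply: hl_all => //; apply: side_ab.
  by rewrite hx -q_side hf.
have hd : (if a < b then b <= d else d <= b) by case: (a < b) hf.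
rewrite /WP (Phi345 l hp hb hab hSo hn hd).
case: eqP => [edb|/eqP ndb].
  subst d; case: ltngtP hab hSo hn hd => // hlt _ hSo hn _.
  - split; first exact: L4.
    by move=> R rho rhob lam lamb x; apply: W4.
  - split; first exact: L5.
    by move=> R rho rhob lam lamb x; apply: W5.
have ho : oside (a < b) b d by rewrite /oside; case: (a < b) hd => /= h; lia.
split; first exact: L3.
by move=> R rho rhob lam lamb x; apply: W3.
Qed.

Lemma right_all U : smirnov U -> 2 <= nnodes U ->
  let: (T, S0, b) := Psi U in inX T S0 b /\ Phi T S0 b = U.
Proof.
move=> hU hn; have hne : ~~ isLeaf U by case/andP: hU.
move: (dec_spec hne); rewrite /Psi; case: (dec U) => [[c' l'] b] [hp eU].
subst U; clear hne.
move: hU; rewrite smirnov_plug smirE => /andP[hc /and3P[hlk hsl _]].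
have /andP[hb hf] := lok_leaf hlk.
have := unsnocP c'; case: (unsnoc c') => [[c1 f]|] ec; subst c'.
- case: f hp hc hn => [x R | L y] hp hc hn.
  + move: hp hc; rewrite pathok_rcons ctxsm_rcons /= => /andP[hp /andP[/eqP ex hR]] /andP[hc /andP[hlkR hsR]].
    subst x.
    by move: (RB hp hR hc hlkR hsR hlk hsl); rewrite /qof /=; case: splitS.
  + move: hp hc; rewrite pathok_rcons ctxsm_rcons /= => /andP[hp hfL] /andP[hc /andP[hlkL hsL]].
    case: (y =P b) => [eyb|nyb].
      subst y; rewrite ?eqxx.
      by move: (RC hp hc hlkL hsL hlk hsl); rewrite /qof /=; case: splitS.
    move/eqP: nyb => nyb; rewrite ?(negbTE nyb).
    case: ifP => hcase.
      exact: RD.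
    move/negbT: hcase; rewrite negb_or => /andP[hne' /negbTE hcase].
    by move: (RE hp hfL hc hlkL hsL hlk hsl nyb hne' hcase); case: splitS.
- have hne' : ~~ isLeaf l' by case: (l') hn.
  have hlb : lab l' != b by move: hf; rewrite /fok hne'.
  by move: (RA hne' hsl hb hlb); case: splitS.
Qed.

Theorem theorem1 :
  (* well defined: Phi maps X into Smirnov trees with at least 2 nodes *)
  (forall T S b, inX T S b -> smirnov (Phi T S b) /\ 2 <= nnodes (Phi T S b)) /\
  (* injective on X *)
  (forall T S b T' S' b', inX T S b -> inX T' S' b' ->
      Phi T S b = Phi T' S' b' -> [/\ T = T', S = S' & b = b']) /\
  (* surjective onto Smirnov trees with at least 2 nodes *)
  (forall U, smirnov U -> 2 <= nnodes U ->
      exists T S b, inX T S b /\ Phi T S b = U) /\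
  (* weight preserving *)
  (forall (R : comNzRingType) (rho rhob lam lamb : R) (x : nat -> R) T S b,
      inX T S b ->
      w rho rhob lam lamb x (Phi T S b) = wX rho rhob lam lamb x T S b) /\
  (* principal node of Phi(T,S,b) has label b *)
  (forall T S b, inX T S b -> plab (Phi T S b) = b).
Proof.
split; [|split; [|split; [|split]]].
- by move=> T S b /left_all [[h1 h2 _ _] _].
- move=> T S b T' S' b' /left_all [[_ _ _ h1] _] /left_all [[_ _ _ h2] _] e.
  by move: h1; rewrite e h2 => [[-> -> ->]].
- move=> U hU hn; move: (right_all hU hn); case: (Psi U) => [[T S] b] [h1 h2].
  by exists T, S, b.
- by move=> R rho rhob lam lamb x T S b /left_all [_ h]; apply: h.
- by move=> T S b /left_all [[_ _ h _] _].
Qed.
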